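(* Let $d\geq 1$, let $p_1<\dots<p_d$ be the first $d$ prime numbers, let $N\geq 1$ be an integer, let $C>1$ and $\varepsilon\in\mathbb{R}$. Let $\mathbf{A}_1$ be the $(d+1)\times(d+1)$ matrix whose $i$-th column ($1\le i\le d$) has entry $\ln p_i$ in row $i$, entry $C\ln p_i$ in row $d+1$ and zeros elsewhere, and whose last column is $(0,\dots,0,C\ln N)^T$. Let $\mathbf{z}\in\mathbb{Z}^{d+1}$ with $z_{d+1}<0$, put $\gamma=|z_{d+1}|\geq 1$, $$u=\prod_{1\le i\le d,\ z_i>0}p_i^{z_i},\qquad k=\prod_{1\le i\le d,\ z_i<0}p_i^{-z_i},$$ and suppose $\|\mathbf{A}_1\mathbf{z}\|_1\leq\varepsilon$. Then $$|u-kN^\gamma|\leq\frac{N^{\gamma/2}}{C}\exp\left(\frac{\varepsilon}{2}\right).$$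
   Context: $\ln$ is the natural logarithm, $\|\cdot\|_1$ the $\ell^1$ norm; empty products equal $1$. *)

(* Defs.v *)
From HB Require Import structures.
From mathcomp Require Import all_boot all_order all_algebra.
From mathcomp Require Import all_classical all_reals all_analysis.
Set Implicit Arguments. Unset Strict Implicit. Unset Printing Implicit Defensive.
Import Order.TTheory GRing.Theory Num.Theory.
Local Open Scope ring_scope.

(* p 0 < p 1 < ... < p (d-1) are the first d prime numbers (0-indexed:
   the paper's p_i is p (i-1)). *)
Definition first_primes (d : nat) (p : nat -> nat) : Prop :=
  [/\ (forall i, (i < d)%N -> prime (p i)),
      (forall i j, (i < j)%N -> (j < d)%N -> (p i < p j)%N) &
      (forall q, prime q -> (q <= p d.-1)%N -> exists2 i, (i < d)%N & p i = q)].

(* The (d+1)x(d+1) matrix A_1 (indices 0..d; index d is the paper's d+1). *)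
Definition A1 {R : realType} (d : nat) (p : nat -> nat) (C : R) (N : nat)
  : 'M[R]_(d.+1) :=
  \matrix_(i < d.+1, j < d.+1)
    if (j < d)%N then
      (if i == j then ln ((p j)%:R : R)
       else if i == ord_max then C * ln ((p j)%:R : R) else 0)
    else (if i == ord_max then C * ln (N%:R : R) else 0).

Definition norm1 {R : realType} (n : nat) (v : 'cV[R]_n) : R :=
  \sum_(i < n) `|v i 0|.

Definition u_of (d : nat) (p : nat -> nat) (z : 'cV[int]_(d.+1)) : nat :=
  (\prod_(i < d | (0 < z (widen_ord (leqnSn d) i) ord0)%R)
     p i ^ `|z (widen_ord (leqnSn d) i) ord0|%N)%N.
Definition k_of (d : nat) (p : nat -> nat) (z : 'cV[int]_(d.+1)) : nat :=
  (\prod_(i < d | (z (widen_ord (leqnSn d) i) ord0 < 0)%R)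
     p i ^ `|z (widen_ord (leqnSn d) i) ord0|%N)%N.

(* Main.v *)
Require Import Defs.
From HB Require Import structures.
From mathcomp Require Import all_boot all_order all_algebra.
From mathcomp Require Import all_classical all_reals all_analysis.
From mathcomp Require Import ring lra.
Import Order.TTheory GRing.Theory Num.Theory.
Local Open Scope ring_scope.

Lemma exp_tangent (R : realType) (X Z : R) : expR Z * (1 + (X - Z)) <= expR X.
Proof.
have -> : expR X = expR Z * expR (X - Z) by rewrite -expRD addrC subrK.
by rewrite ler_pM2l ?expR_gt0 // expR_ge1Dx.
Qed.

Lemma core' (R : realType) (m s : R) : 0 < m -> 0 <= s ->
  (2 * m + 1) * (expR (2 * s) - 1) <= expR ((2 * m + 2) * s).
Proof.
move=> m0 s0.
have hm1 : 1 / (m + 1) < 1 by rewrite ltr_pdivrMr; lra.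
have hm1' : 0 < 1 / (m + 1) by rewrite divr_gt0 //; lra.
have y00 : 0 < (m + 1) / m by rewrite divr_gt0 //; lra.
have hL : 1 / (m + 1) <= ln ((m + 1) / m).
  have -> : ln ((m + 1) / m) = - ln (1 + (- (1 / (m + 1)))).
    rewrite -lnV; last by rewrite posrE; lra.
    congr (ln _); field; lra.
  rewrite lerNr; apply: le_ln1Dx.
  by rewrite ltrN2.
move: hL; set L := ln ((m + 1) / m) => hL.
have eL : expR L = (m + 1) / m by rewrite /L lnK.
set E := expR (m * L).
have hE : 1 + m * L <= E by exact: expR_ge1Dx.
have E0 : 0 < E by exact: expR_gt0.
set Z := 2 * s + m * L.
set X := (2 * m + 2) * s.
set Y := (m + 1) * L.
have h1 := @exp_tangent R X Z.
have h2 := @exp_tangent R Y Z.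
have eZ : expR Z = expR (2 * s) * E by rewrite /Z expRD.
have eY : expR Y = (m + 1) / m * E by rewrite /Y mulrDl mul1r addrC expRD eL.
have hcomb : (m + 1) * expR Z <= expR X + m * expR Y.
  have : expR Z * (1 + (X - Z)) + m * (expR Z * (1 + (Y - Z))) <= expR X + m * expR Y.
    by apply: lerD => //; rewrite ler_pM2l.
  suff -> : expR Z * (1 + (X - Z)) + m * (expR Z * (1 + (Y - Z))) = (m + 1) * expR Z by [].
  rewrite /X /Y /Z; ring.
have my0 : m * ((m + 1) / m * E) = (m + 1) * E by field; rewrite gt_eqF.
rewrite eZ eY my0 in hcomb.
have he2 : 1 <= expR (2 * s) by have := expR_ge1Dx (2 * s); lra.
have hrE : 2 * m + 1 <= (m + 1) * E.
  have : m * (1 / (m + 1)) <= m * L by rewrite ler_pM2l.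
  have -> : m * (1 / (m + 1)) = 1 - 1 / (m + 1) by field; lra.
  move=> H.
  have : (m + 1) * (1 / (m + 1)) = 1 by field; lra.
  nra.
nra.
Qed.

Lemma core (R : realType) (C s : R) : 1 < C -> 0 <= s ->
  C * (expR (2 * s) - 1) <= expR ((C + 1) * s).
Proof.
move=> C1 s0.
have := @core' R ((C - 1) / 2) s.
have -> : 2 * ((C - 1) / 2) + 1 = C by field.
have -> : 2 * ((C - 1) / 2) + 2 = C + 1 by field.
apply => //; rewrite divr_gt0 //; lra.
Qed.
Lemma key (R : realType) (C U P : R) : 1 < C ->
  C * `|expR U - expR P| <= expR ((U + P) / 2 + C * `|U - P| / 2).
Proof.
move=> C1.
wlog hPU : U P / P <= U.
  move=> H; case: (leP P U) => [|/ltW] h; first exact: H.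
  by have := H P U h; rewrite distrC (distrC P) (addrC P).
have s0 : 0 <= (U - P) / 2 by rewrite divr_ge0 //; lra.
have := @core R C _ C1 s0.
have eU : expR U = expR P * expR (2 * ((U - P) / 2)).
  by rewrite -expRD; congr expR; field.
rewrite eU (_ : expR P * _ - expR P = expR P * (expR (2 * ((U - P) / 2)) - 1)); last by ring.
rewrite normrM gtr0_norm ?expR_gt0 //.
have h1 : 1 <= expR (2 * ((U - P) / 2)) by have := expR_ge1Dx (2 * ((U - P) / 2)); lra.
rewrite ger0_norm; last by lra.
have -> : (U + P) / 2 + C * `|U - P| / 2 = P + (C + 1) * ((U - P) / 2).
  by rewrite ger0_norm; [field | lra].
rewrite expRD => H.
rewrite mulrCA ler_pM2l ?expR_gt0 //.
Qed.
Theorem lemma1 (R : realType) (d : nat) (p : nat -> nat) (N : nat) (C eps : R)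
  (z : 'cV[int]_(d.+1)) :
  (1 <= d)%N -> first_primes d p -> (1 <= N)%N -> 1 < C ->
  z ord_max ord0 < 0 ->
  norm1 (A1 d p C N *m map_mx (fun x : int => (x%:~R : R)) z) <= eps ->
  let gamma := `|z ord_max ord0|%N in
  `| ((u_of p z)%:R : R) - (k_of p z)%:R * (N%:R : R) ^+ gamma |
    <= (N%:R : R) `^ (gamma%:R / 2) / C * expR (eps / 2).
Proof.
move=> d1 [pp _ _] N1 C1 zd hn /=.
set gamma := `|z ord_max ord0|%N.
pose w (i : 'I_d) := z (widen_ord (leqnSn d) i) ord0.
pose l (i : 'I_d) := ln ((p i)%:R : R).
have p0 : forall i : 'I_d, 0 < ((p i)%:R : R).
  by move=> i; rewrite ltr0n prime_gt0 // pp.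
have l0 : forall i : 'I_d, 0 <= l i.
  by move=> i; apply: ln_ge0; rewrite ler1n prime_gt0 // pp.
have N0 : 0 < (N%:R : R) by rewrite ltr0n.
pose U := \sum_(i < d | 0 < w i) (`|w i|%N)%:R * l i.
pose K := \sum_(i < d | w i < 0) (`|w i|%N)%:R * l i.
have eu : ((u_of p z)%:R : R) = expR U.
  rewrite /u_of natr_prod /U expR_sum; apply: eq_bigr => i _.
  by rewrite natrX expRM_natl /l lnK ?posrE.
have ek : ((k_of p z)%:R : R) = expR K.
  rewrite /k_of natr_prod /K expR_sum; apply: eq_bigr => i _.
  by rewrite natrX expRM_natl /l lnK ?posrE.
have eN : (N%:R : R) ^+ gamma = expR (gamma%:R * ln N%:R).
  by rewrite expRM_natl lnK ?posrE.
have epow : (N%:R : R) `^ (gamma%:R / 2) = expR (gamma%:R * ln N%:R / 2).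
  by rewrite /powR gt_eqF // mulrAC.
rewrite eu ek eN epow -expRD.
move: hn; set M := (A1 d p C N *m _) => hn.
have hw : forall i : 'I_d, (widen_ord (leqnSn d) i == ord_max) = false.
  by move=> i; apply/negbTE; rewrite -val_eqE /= neq_ltn ltn_ord.
have hww : forall i j : 'I_d, (widen_ord (leqnSn d) i == widen_ord (leqnSn d) j) = (i == j).
  by move=> i j; rewrite -val_eqE /= val_eqE.
have Mi : forall i : 'I_d, M (widen_ord (leqnSn d) i) ord0 = l i * (w i)%:~R.
  move=> i; rewrite /M mxE big_ord_recr /= !mxE /= ltnn /= hw /=.
  rewrite mul0r addr0.
  rewrite (bigD1 i) //= big1 ?addr0.
    by rewrite /A1 !mxE /= ltn_ord eqxx.
  move=> j hj; rewrite /A1 !mxE /= ltn_ord hww eq_sym (negbTE hj) hw.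
  by rewrite mul0r.
have Mmax : M ord_max ord0 = C * (\sum_(i < d) l i * (w i)%:~R + ln (N%:R : R) * (z ord_max ord0)%:~R).
  rewrite /M mxE big_ord_recr /= !mxE /= ltnn /= eqxx mulrDr mulrA; congr (_ + _).
  rewrite mulr_sumr; apply: eq_bigr => j _.
  rewrite /A1 !mxE /= ltn_ord eq_sym hw eqxx.
  rewrite /l /w; ring.
have S : \sum_(i < d) `|l i * (w i)%:~R| = U + K /\ \sum_(i < d) l i * (w i)%:~R = U - K.
  have eU' : U = \sum_(i < d) (if 0 < w i then (`|w i|%N)%:R * l i else 0) by rewrite /U big_mkcond.
  have eK' : K = \sum_(i < d) (if w i < 0 then (`|w i|%N)%:R * l i else 0) by rewrite /K big_mkcond.
  rewrite eU' eK' -big_split /= -sumrB; split; apply: eq_bigr => i _;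
  rewrite natr_absz intr_norm ?normrM ?(ger0_norm (l0 i));
  case: (ltrgtP (w i) 0) => h.
  - by rewrite ltr0_norm ?ltrz0 // add0r; ring.
  - by rewrite gtr0_norm ?ltr0z // addr0 mulrC.
  - by rewrite h normr0 !mulr0 addr0.
  - by rewrite ltr0_norm ?ltrz0 // sub0r; ring.
  - by rewrite gtr0_norm ?ltr0z // subr0 mulrC.
  - by rewrite h !mulr0 subr0.
have ezd : ((z ord_max ord0)%:~R : R) = - gamma%:R.
  by rewrite /gamma natr_absz intr_norm ltr0_norm ?ltrz0 // opprK.
have hn' : U + K + C * `|U - (K + gamma%:R * ln (N%:R : R))| <= eps.
  move: hn; rewrite /norm1 big_ord_recr /=.
  rewrite (eq_bigr (fun i : 'I_d => `|l i * (w i)%:~R|)); last by move=> i _; rewrite Mi.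
  rewrite Mmax (proj1 S) (proj2 S) ezd normrM (gtr0_norm (lt_trans ltr01 C1)).
  congr (_ + _ * `|_| <= _); ring.
have C0 : 0 < C by apply: lt_trans C1.
rewrite mulrAC ler_pdivlMr // mulrC -expRD.
apply: le_trans (@key R C U (K + gamma%:R * ln (N%:R : R)) C1) _.
rewrite ler_expR.
move: hn'; set t := C * `|_| => hn'.
lra.
Qed.
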